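(* Let $\lambda_1,\lambda_2$, $\Omega$, $\varphi$, $f$ be as in the context, with $(c,\theta)\in\Omega$, and define $g:\mathbb{C}\to\mathbb{C}$ by $g(u+iv)=e^{f(u)+cv}e^{i\varphi(u)}$. Then $$g_{z\bar z}=\frac{2\left[\lambda_1^2(g+\bar g)-\lambda_2^2(g-\bar g)\right]}{\lambda_1^2(g+\bar g)^2-\lambda_2^2(g-\bar g)^2}\,g_zg_{\bar z},$$ and the Hopf differential of $g$ is $Q=\frac18e^{-i\theta}\,dz^2$.
   Context: Either $\lambda_1>\lambda_2>0$ or $\lambda_1=\lambda_2=1$. For $c>0$ put $\theta_c^+=\pi$ if $c>\sqrt2\lambda_1$ and $\theta_c^+=\arccos(1-c^2/\lambda_1^2)$ if $0<c\le\sqrt2\lambda_1$; $\Omega=\{(c,\theta): c>0,\ |\theta|<\theta_c^+\}$. For $(c,\theta)\in\Omega$: $D=\sin\theta/c$; $\varphi$ is the global solution of $\varphi'(u)=\sqrt{c^2+2\cos\theta\,B(u)-D^2B(u)^2}$, $\varphi(0)=0$, where $B(u)=\lambda_1^2\cos^2\varphi(u)+\lambda_2^2\sin^2\varphi(u)$; $f$ is the solution of $f'(u)=DB(u)$, $f(0)=0$. Here $z=u+iv$, $g_z=\frac12(g_u-ig_v)$, $g_{\bar z}=\frac12(g_u+ig_v)$, and the Hopf differential of $g$ is $Q=\frac{g_z\bar g_z}{\lambda_1^2(g+\bar g)^2-\lambda_2^2(g-\bar g)^2}dz^2$ with $\bar g_z=\partial_z(\bar g)$. *)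

(* Defs.v *)
From Stdlib Require Import Reals.
From Coquelicot Require Import Coquelicot.

Local Open Scope R_scope.

Definition admissible_lambdas (l1 l2 : R) : Prop :=
  (0 < l2 /\ l2 < l1) \/ (l1 = 1 /\ l2 = 1).

Definition theta_plus (l1 c : R) : R :=
  if Rlt_dec (sqrt 2 * l1) c then PI else acos (1 - c ^ 2 / l1 ^ 2).

Definition in_Omega (l1 c theta : R) : Prop :=
  0 < c /\ Rabs theta < theta_plus l1 c.

Definition Dconst (c theta : R) : R := sin theta / c.

Definition Bfun (l1 l2 : R) (phi : R -> R) (u : R) : R :=
  l1 ^ 2 * (cos (phi u)) ^ 2 + l2 ^ 2 * (sin (phi u)) ^ 2.

Definition phi_solution (l1 l2 c theta : R) (phi : R -> R) : Prop :=
  phi 0 = 0 /\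
  forall u : R, is_derive phi u
    (sqrt (c ^ 2 + 2 * cos theta * Bfun l1 l2 phi u
           - (Dconst c theta) ^ 2 * (Bfun l1 l2 phi u) ^ 2)).

Definition f_solution (l1 l2 c theta : R) (phi f : R -> R) : Prop :=
  f 0 = 0 /\
  forall u : R, is_derive f u (Dconst c theta * Bfun l1 l2 phi u).

Definition gfun (c : R) (phi f : R -> R) (z : Complex.C) : Complex.C :=
  Cmult (RtoC (exp (f (Re z) + c * Im z))) (cos (phi (Re z)), sin (phi (Re z))).

Definition pd_u (h : Complex.C -> Complex.C) (z : Complex.C) : Complex.C :=
  (Derive (fun t : R => Re (h (Re z + t, Im z))) 0,
   Derive (fun t : R => Im (h (Re z + t, Im z))) 0).

Definition pd_v (h : Complex.C -> Complex.C) (z : Complex.C) : Complex.C :=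
  (Derive (fun t : R => Re (h (Re z, Im z + t))) 0,
   Derive (fun t : R => Im (h (Re z, Im z + t))) 0).

Local Open Scope C_scope.

Definition d_z (h : Complex.C -> Complex.C) (z : Complex.C) : Complex.C :=
  / 2 * (pd_u h z - Ci * pd_v h z).

Definition d_zbar (h : Complex.C -> Complex.C) (z : Complex.C) : Complex.C :=
  / 2 * (pd_u h z + Ci * pd_v h z).

(* Coefficient of dz^2 in the Hopf differential of g:
   g_z (gbar)_z / (l1^2 (g + gbar)^2 - l2^2 (g - gbar)^2). *)
Definition hopf_coeff (l1 l2 : R) (g : Complex.C -> Complex.C) (z : Complex.C)
  : Complex.C :=
  d_z g z * d_z (fun w => Cconj (g w)) z
  / (RtoC (l1 ^ 2) * (g z + Cconj (g z)) ^ 2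
     - RtoC (l2 ^ 2) * (g z - Cconj (g z)) ^ 2).

(* Main.v *)
Require Import Defs.
From Stdlib Require Import Reals Lra Psatz FunctionalExtensionality.
From Coquelicot Require Import Coquelicot.
Local Open Scope R_scope.

Lemma cos_gt_bound (l1 c theta : R) : 0 < l1 -> in_Omega l1 c theta ->
  1 - c^2/l1^2 < cos theta.
Proof.
  intros Hl1 [Hc Ht]. unfold theta_plus in Ht.
  assert (Hct : cos theta = cos (Rabs theta)).
  { unfold Rabs; destruct (Rcase_abs theta); [rewrite cos_neg|]; reflexivity. }
  destruct (Rlt_dec (sqrt 2 * l1) c) as [H|H].
  - assert (Hs : 0 <= sqrt 2) by apply sqrt_pos.
    assert (H2 : sqrt 2 * sqrt 2 = 2) by (apply sqrt_sqrt; lra).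
    assert (Hp : 0 <= sqrt 2 * l1) by nra.
    assert ((sqrt 2 * l1) * (sqrt 2 * l1) < c * c) by (apply Rmult_le_0_lt_compat; lra).
    assert (2 * l1^2 < c^2) by nra.
    assert (1 - c^2/l1^2 < -1).
    { apply Rlt_gt in Hl1. unfold Rdiv. 
      assert (c^2 * / l1^2 > 2). { apply Rmult_gt_reg_r with (l1^2). nra.
        field_simplify; [nra| nra]. }
      lra. }
    pose proof (COS_bound theta). lra.
  - apply Rnot_lt_le in H.
    assert (Hs : 0 <= sqrt 2) by apply sqrt_pos.
    assert (H2 : sqrt 2 * sqrt 2 = 2) by (apply sqrt_sqrt; lra).
    assert (Hp : 0 <= c) by lra.
    assert (c * c <= (sqrt 2 * l1) * (sqrt 2 * l1)) by (apply Rmult_le_compat; lra).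
    assert (c^2 <= 2 * l1^2) by nra.
    set (y := 1 - c^2/l1^2) in *.
    assert (Hy : -1 <= y <= 1).
    { unfold y. assert (0 <= c^2/l1^2 <= 2).
      { split. apply Rle_mult_inv_pos; nra. 
        apply Rmult_le_reg_r with (l1^2). nra. field_simplify; nra. }
      lra. }
    destruct (acos_bound y) as [A1 A2].
    rewrite Hct, <- (cos_acos y Hy).
    apply cos_decreasing_1; try lra; try apply Rabs_pos.
Qed.

Definition Qf (l1 l2 c theta : R) (phi : R -> R) (u : R) : R :=
  c ^ 2 + 2 * cos theta * Bfun l1 l2 phi u
           - (Defs.Dconst c theta) ^ 2 * (Bfun l1 l2 phi u) ^ 2.

Lemma B_bounds l1 l2 phi u : admissible_lambdas l1 l2 ->
  0 < l2^2 <= Bfun l1 l2 phi u /\ Bfun l1 l2 phi u <= l1^2.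
Proof.
  intros H. unfold Bfun. pose proof (sin2_cos2 (phi u)) as Hp. unfold Rsqr in Hp.
  assert (0 < l2 /\ l2 <= l1) as [H1 H2] by (destruct H as [[? ?]|[-> ->]]; lra).
  assert (l2^2 <= l1^2) by nra.
  assert (0 <= cos (phi u)^2) by nra. assert (0 <= sin (phi u)^2) by nra.
  nra.
Qed.

Lemma Q_pos l1 l2 c theta phi u : admissible_lambdas l1 l2 -> in_Omega l1 c theta ->
  0 < Qf l1 l2 c theta phi u.
Proof.
  intros Ha Ho.
  assert (Hl1 : 0 < l1) by (destruct Ha as [[? ?]|[-> ->]]; lra).
  pose proof (cos_gt_bound l1 c theta Hl1 Ho) as Hct.
  destruct Ho as [Hc _].
  destruct (B_bounds l1 l2 phi u Ha) as [[Hl2 Hb1] Hb2].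
  set (B := Bfun l1 l2 phi u) in *.
  pose proof (sin2_cos2 theta) as Hp. unfold Rsqr in Hp.
  pose proof (COS_bound theta).
  assert (Hk : l1^2 - c^2 < l1^2 * cos theta).
  { apply Rmult_lt_compat_l with (r := l1^2) in Hct; [|nra].
    replace (l1^2 * (1 - c^2/l1^2)) with (l1^2 - c^2) in Hct by (field; lra). lra. }
  assert (F1 : 0 < c^2 - B * (1 - cos theta)) by nra.
  assert (F2 : 0 < c^2 + B * (1 + cos theta)) by nra.
  assert (E : Qf l1 l2 c theta phi u = (c^2 - B * (1 - cos theta)) * (c^2 + B * (1 + cos theta)) / c^2).
  { unfold Qf, Defs.Dconst. fold B. field_simplify; try lra. 
    replace (sin theta ^ 2) with (1 - cos theta ^ 2) by nra. field. lra. }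
  rewrite E. apply Rdiv_lt_0_compat; nra.
Qed.

Lemma pd_u_eq (h : C -> C) z x y :
  is_derive (fun t => Re (h (Re z + t, Im z))) 0 x ->
  is_derive (fun t => Im (h (Re z + t, Im z))) 0 y -> pd_u h z = (x, y).
Proof. intros H1 H2. unfold pd_u. apply f_equal2; apply is_derive_unique; assumption. Qed.

Lemma pd_v_eq (h : C -> C) z x y :
  is_derive (fun t => Re (h (Re z, Im z + t))) 0 x ->
  is_derive (fun t => Im (h (Re z, Im z + t))) 0 y -> pd_v h z = (x, y).
Proof. intros H1 H2. unfold pd_v. apply f_equal2; apply is_derive_unique; assumption. Qed.

Lemma Cdiv_RtoC (x : C) (d : R) : d <> 0 -> Cdiv x (RtoC d) = Cmult x (RtoC (/ d)).
Proof. intros Hd. apply injective_projections; simpl; field; auto. Qed.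

Ltac splitc := repeat match goal with |- _ /\ _ => split end; try exact I.

Lemma Derive_eta (h : R -> R) x l : is_derive h x l -> Derive (fun y : R => h y) x = l.
Proof. intros H. apply is_derive_unique. exact H. Qed.

Definition Bp l1 l2 c theta phi u :=
  - 2 * (l1^2 - l2^2) * cos (phi u) * sin (phi u) * sqrt (Qf l1 l2 c theta phi u).

Lemma B_deriv l1 l2 c theta phi u : phi_solution l1 l2 c theta phi ->
  is_derive (fun x => Bfun l1 l2 phi x) u (Bp l1 l2 c theta phi u).
Proof.
  intros [_ Hp]. unfold Bfun. auto_derive.
  - splitc; eexists; apply Hp.
  - rewrite (Derive_eta _ _ _ (Hp u)). unfold Bp, Qf. ring.
Qed.

Lemma Q_deriv l1 l2 c theta phi u : phi_solution l1 l2 c theta phi ->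
  is_derive (fun x => Qf l1 l2 c theta phi x) u
    ((2 * cos theta - 2 * (Defs.Dconst c theta)^2 * Bfun l1 l2 phi u) * Bp l1 l2 c theta phi u).
Proof.
  intros Hp. unfold Qf. auto_derive.
  - splitc; eexists; apply (B_deriv _ _ _ _ _ _ Hp).
  - rewrite (Derive_eta _ _ _ (B_deriv _ _ _ _ _ u Hp)). ring.
Qed.

Local Open Scope C_scope.
Ltac side Hf Hp Hps HQ := splitc;
  match goal with
  | |- ex_derive (fun x => ?F x) ?y =>
      first [ exact (ex_intro _ _ (Hf y)) | exact (ex_intro _ _ (Hp y))
            | exact (ex_intro _ _ (B_deriv _ _ _ _ _ y Hps))
            | exact (ex_intro _ _ (Q_deriv _ _ _ _ _ y Hps)) ]
  | |- (0 < _)%R => rewrite ?Rplus_0_r; apply HQ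
  end.
Ltac elimD Hf Hp Hps HQ := repeat match goal with |- context [Derive ?F 0] =>
    let x := fresh "x" in let H := fresh "H" in
    evar (x : R); assert (H : is_derive F 0 x);
    [ subst x; auto_derive; [ match goal with |- @eq _ _ _ => reflexivity | _ => side Hf Hp Hps HQ end .. ]
    | rewrite (is_derive_unique _ _ _ H); subst x; clear H ] end.

Theorem proposition5p3 (l1 l2 c theta : R) (phi f : R -> R) :
  admissible_lambdas l1 l2 ->
  in_Omega l1 c theta ->
  phi_solution l1 l2 c theta phi ->
  f_solution l1 l2 c theta phi f ->
  let g := gfun c phi f in
  (forall z : Complex.C,
     d_z (d_zbar g) z =
     2 * (RtoC (l1 ^ 2) * (g z + Cconj (g z)) - RtoC (l2 ^ 2) * (g z - Cconj (g z)))
     / (RtoC (l1 ^ 2) * (g z + Cconj (g z)) ^ 2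
        - RtoC (l2 ^ 2) * (g z - Cconj (g z)) ^ 2)
     * d_z g z * d_zbar g z) /\
  (forall z : Complex.C,
     hopf_coeff l1 l2 g z = / 8 * (cos theta, (- sin theta)%R)).
Proof.
  intros Ha Ho Hps Hfs g.
  pose proof Hps as [_ Hp]. pose proof Hfs as [_ Hf].
  assert (Hc : (0 < c)%R) by (destruct Ho; auto).
  assert (HQ : forall y, (0 < Qf l1 l2 c theta phi y)%R) by (intros; apply Q_pos; auto).
  assert (HBb : forall y, (0 < l2^2 <= Bfun l1 l2 phi y /\ Bfun l1 l2 phi y <= l1^2)%R)
    by (intros; apply B_bounds; auto).
  assert (DF : forall y, (Derive (fun x : R => f x) y = Defs.Dconst c theta * Bfun l1 l2 phi y)%R)
    by (intros; apply Derive_eta, Hf).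
  assert (DP : forall y, (Derive (fun x : R => phi x) y = sqrt (Qf l1 l2 c theta phi y))%R)
    by (intros; apply Derive_eta, Hp).
  assert (DB : forall y, (Derive (fun x : R => Bfun l1 l2 phi x) y = Bp l1 l2 c theta phi y)%R)
    by (intros; apply Derive_eta, B_deriv; auto).
  assert (DQ : forall y, (Derive (fun x : R => Qf l1 l2 c theta phi x) y =
     ((2 * cos theta - 2 * (Defs.Dconst c theta)^2 * Bfun l1 l2 phi y) * Bp l1 l2 c theta phi y))%R)
    by (intros; apply Derive_eta, Q_deriv; auto).
  assert (Hzb : d_zbar g = fun w =>
     ( / 2 * (exp (f (Re w) + c * Im w) * (Defs.Dconst c theta * Bfun l1 l2 phi (Re w) * cos (phi (Re w))
               - sqrt (Qf l1 l2 c theta phi (Re w)) * sin (phi (Re w)))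
              - c * exp (f (Re w) + c * Im w) * sin (phi (Re w))),
       / 2 * (exp (f (Re w) + c * Im w) * (Defs.Dconst c theta * Bfun l1 l2 phi (Re w) * sin (phi (Re w))
               + sqrt (Qf l1 l2 c theta phi (Re w)) * cos (phi (Re w)))
              + c * exp (f (Re w) + c * Im w) * cos (phi (Re w))))%R).
  { apply functional_extensionality. intros [u v].
    unfold d_zbar, pd_u, pd_v, g, gfun. simpl.
    elimD Hf Hp Hps HQ.
    rewrite !Rplus_0_r, DF, DP.
    apply injective_projections; simpl; field. }
  split.
  - intros [u v].
    assert (HB0 : (0 < Bfun l1 l2 phi u)%R) by (destruct (HBb u); lra).
    assert (HE0 : (0 < exp (f u + c * v))%R) by apply exp_pos.
    assert (HDn : RtoC (l1^2) * (g (u,v) + Cconj (g (u,v)))^2 - RtoC (l2^2) * (g (u,v) - Cconj (g (u,v)))^2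
                  = RtoC (4 * exp (f u + c * v)^2 * Bfun l1 l2 phi u)).
    { unfold g, gfun, Bfun; apply injective_projections; simpl; ring. }
    rewrite HDn, Cdiv_RtoC by (apply Rgt_not_eq; apply Rmult_lt_0_compat; [|exact HB0]; 
        apply Rmult_lt_0_compat; [lra| apply pow_lt; exact HE0]).
    rewrite Hzb.
    unfold d_z, pd_u, pd_v. simpl.
    elimD Hf Hp Hps HQ.
    rewrite !Rplus_0_r, DF, DP, DB, DQ.
    assert (Hbb : (sqrt (Qf l1 l2 c theta phi u) * sqrt (Qf l1 l2 c theta phi u) = Qf l1 l2 c theta phi u)%R)
      by (apply sqrt_sqrt; apply Rlt_le, HQ).
    assert (Hb0 : (0 < sqrt (Qf l1 l2 c theta phi u))%R) by (apply sqrt_lt_R0, HQ).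
    set (b := sqrt (Qf l1 l2 c theta phi u)) in *.
    set (E := exp (f u + c * v)) in *.
    set (co := cos (phi u)) in *.
    set (s := sin (phi u)) in *.
    unfold g, gfun. simpl. fold E co s.
    unfold Bp. fold b.
    apply injective_projections; simpl.
    + match goal with |- ?L = ?R => assert (Hc1 : (L - R = -(E*s*(co*s*(l1^2-l2^2))/(4*Bfun l1 l2 phi u))*(b*b - Qf l1 l2 c theta phi u))%R) end.
      { unfold Qf, Defs.Dconst. unfold Bfun in *. fold co s in HB0. fold co s. field. repeat split; intro Hx; nra. }
      rewrite Hbb in Hc1. replace (Qf l1 l2 c theta phi u - Qf l1 l2 c theta phi u)%R with 0%R in Hc1 by ring.
      rewrite Rmult_0_r in Hc1. lra.
    + match goal with |- ?L = ?R => assert (Hc1 : (L - R = (E*co*(co*s*(l1^2-l2^2))/(4*Bfun l1 l2 phi u))*(b*b - Qf l1 l2 c theta phi u))%R) end.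
      { unfold Qf, Defs.Dconst. unfold Bfun in *. fold co s in HB0. fold co s. field. repeat split; intro Hx; nra. }
      rewrite Hbb in Hc1. replace (Qf l1 l2 c theta phi u - Qf l1 l2 c theta phi u)%R with 0%R in Hc1 by ring.
      rewrite Rmult_0_r in Hc1. lra.

  - intros [u v].
    assert (HB0 : (0 < Bfun l1 l2 phi u)%R) by (destruct (HBb u); lra).
    assert (HE0 : (0 < exp (f u + c * v))%R) by apply exp_pos.
    assert (HDn : RtoC (l1^2) * (g (u,v) + Cconj (g (u,v)))^2 - RtoC (l2^2) * (g (u,v) - Cconj (g (u,v)))^2
                  = RtoC (4 * exp (f u + c * v)^2 * Bfun l1 l2 phi u)).
    { unfold g, gfun, Bfun; apply injective_projections; simpl; ring. }
    unfold hopf_coeff.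
    rewrite HDn, Cdiv_RtoC by (apply Rgt_not_eq; apply Rmult_lt_0_compat; [|exact HB0]; 
        apply Rmult_lt_0_compat; [lra| apply pow_lt; exact HE0]).
    unfold d_z, pd_u, pd_v, g, gfun. simpl.
    elimD Hf Hp Hps HQ.
    rewrite !Rplus_0_r, DF, DP.
    assert (Hbb : (sqrt (Qf l1 l2 c theta phi u) * sqrt (Qf l1 l2 c theta phi u) = Qf l1 l2 c theta phi u)%R)
      by (apply sqrt_sqrt; apply Rlt_le, HQ).
    assert (Hb0 : (0 < sqrt (Qf l1 l2 c theta phi u))%R) by (apply sqrt_lt_R0, HQ).
    assert (Hpy : (cos (phi u) ^ 2 + sin (phi u) ^ 2 - 1 = 0)%R)
      by (pose proof (sin2_cos2 (phi u)) as Hs; unfold Rsqr in Hs; lra).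
    assert (Hz2 : (sqrt (Qf l1 l2 c theta phi u) * sqrt (Qf l1 l2 c theta phi u) - Qf l1 l2 c theta phi u = 0)%R)
      by lra.
    set (b := sqrt (Qf l1 l2 c theta phi u)) in *.
    set (E := exp (f u + c * v)) in *.
    set (co := cos (phi u)) in *.
    set (s := sin (phi u)) in *.
    apply injective_projections; simpl.
    + match goal with |- ?L = ?R => assert (Hc1 : (L - R = (co^2 + s^2 - 1) *
          (((Defs.Dconst c theta * Bfun l1 l2 phi u)^2 + b*b - c^2)/(16*Bfun l1 l2 phi u))
          + (b*b - Qf l1 l2 c theta phi u) * (1/(16*Bfun l1 l2 phi u)))%R) end.
      { unfold Qf, Defs.Dconst. unfold Bfun in *. fold co s in HB0. fold co s. field. repeat split; intro Hx; nra. }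
      rewrite Hpy, Hz2, !Rmult_0_l, Rplus_0_l in Hc1. lra.
    + match goal with |- ?L = ?R => assert (Hc1 : (L - R = (co^2 + s^2 - 1) *
          (-(2*c*(Defs.Dconst c theta * Bfun l1 l2 phi u))/(16*Bfun l1 l2 phi u)))%R) end.
      { unfold Qf, Defs.Dconst. unfold Bfun in *. fold co s in HB0. fold co s. field. repeat split; intro Hx; nra. }
      rewrite Hpy, !Rmult_0_l in Hc1. lra.
Qed.
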